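(* For $p\in(0,1)$ and $N\ge2$, $\bar A_p\ge\min(1,c(p))$, where $$U(p):=\min_{r\in[2,\infty)}\frac{1}{r\,\bigl|\log\bigl(1-(1-p)^{r-1}\bigr)\bigr|},\qquad c(p):=\min_{w\in[0,\infty)}\bigl(U(p)\,w+(1-p)e^{-w}\bigr).$$
   Context: $\log$ is the natural logarithm, $q:=1-p$, $0^0=1$. $\bar A_p:=\min_{\vec m\in\{0,1,\dots,N\}^N}A_p(\vec m)$ where $A_p(\vec m):=\sum_{i=1}^N m_i/i+q\,0^{m_1}\exp(-\sum_{i=2}^N m_i a^i_p)$ and $a^i_p:=|\log(1-(1-p)^{i-1})|$. *)

(* Defs.v *)
From HB Require Import structures.
From mathcomp Require Import all_boot all_order all_algebra.
From mathcomp Require Import all_classical all_reals.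
From mathcomp Require Import all_analysis.
Set Implicit Arguments. Unset Strict Implicit. Unset Printing Implicit Defensive.
Import Order.TTheory GRing.Theory Num.Theory.
Local Open Scope ring_scope.
Local Open Scope classical_set_scope.

Section Defs.
Variable R : realType.

Definition a_coef (p : R) (i : nat) : R := `| ln (1 - (1 - p) ^+ (i.-1)) |.

(* A_p(m) for m in {0,..,N}^N; index k : 'I_N stands for i = k+1.
   0^{m_1} is written as the (one-factor) product of 0 ^+ m_1, so 0^0 = 1. *)
Definition A_p (p : R) (N : nat) (m : {ffun 'I_N -> 'I_N.+1}) : R :=
  \sum_(k < N) (m k)%:R / (k.+1)%:R
  + (1 - p) * (\prod_(k < N | val k == 0%N) (0 : R) ^+ (m k))
      * expR (- \sum_(k < N | (1 <= val k)%N) (m k)%:R * a_coef p k.+1).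

(* \bar A_p := min over the finite set {0..N}^N (seeded with the zero vector,
   which belongs to the set, so this is exactly the minimum). *)
Definition Abar (p : R) (N : nat) : R :=
  \big[Order.min/@A_p p N [ffun _ => ord0]]_(m : {ffun 'I_N -> 'I_N.+1}) @A_p p N m.

Definition U (p : R) : R :=
  inf [set 1 / (r * `| ln (1 - (1 - p) `^ (r - 1)) |) | r in [set r : R | 2 <= r]].

Definition c (p : R) : R :=
  inf [set U p * w + (1 - p) * expR (- w) | w in [set w : R | 0 <= w]].

End Defs.

(* Main.v *)
Require Import Defs.
From HB Require Import structures.
From mathcomp Require Import all_boot all_order all_algebra.
From mathcomp Require Import all_classical all_reals.
From mathcomp Require Import all_analysis.
Import Order.TTheory GRing.Theory Num.Theory.
Local Open Scope ring_scope.

Lemma U_ge0 (R : realType) (p : R) : 0 <= U p.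
Proof.
rewrite /U.
have [r0 r02] : exists r0 : R, 2 <= r0 by exists 2.
apply: lb_le_inf.
  by exists (1 / (r0 * `| ln (1 - (1 - p) `^ (r0 - 1)) |)); exists r0.
move=> _ [r hr <-]; rewrite /= in hr.
apply: divr_ge0 => //; apply: mulr_ge0 => //.
by apply: le_trans hr.
Qed.

Lemma U_bound (R : realType) (p : R) (k : nat) : 0 < p < 1 -> (1 <= k)%N ->
  U p * a_coef p k.+1 <= 1 / (k.+1)%:R.
Proof.
move=> /andP[p0 p1] k1.
have hS : has_lbound [set 1 / (r * `| ln (1 - (1 - p) `^ (r - 1)) |) | r in [set r : R | 2 <= r]].
  exists 0 => _ [r hr <-]; rewrite /= in hr.
  apply: divr_ge0 => //; apply: mulr_ge0 => //.
  by apply: le_trans hr.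
have hr : (2 : R) <= (k.+1)%:R by rewrite ler_nat ltnS.
have := ge_inf hS (ex_intro2 _ _ (k.+1)%:R hr erefl).
rewrite -/(U p).
have -> : (1 - p) `^ ((k.+1)%:R - 1) = (1 - p) ^+ k.
  rewrite -natr1 addrK powR_mulrn //; by rewrite subr_ge0 ltW.
rewrite -/(a_coef p k.+1) /=.
have ha : 0 <= a_coef p k.+1 by rewrite /a_coef.
rewrite le_eqVlt in ha; case/orP: ha => [/eqP <-|ha].
  by move=> _; rewrite mulr0; apply: divr_ge0.
move=> hU.
have := ler_wpM2r (ltW ha) hU.
rewrite mul1r invfM -mulrA mulVf ?gt_eqF // mulr1.
by rewrite div1r.
Qed.

Theorem lemma3 (R : realType) (p : R) (N : nat) :
  0 < p < 1 -> (2 <= N)%N -> Num.min 1 (c p) <= Abar p N.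
Proof.
move=> hp; case: N => [|n] // _.
suff H : forall m : {ffun 'I_n.+1 -> 'I_n.+2}, Num.min 1 (c p) <= A_p p m.
  rewrite /Abar.
  apply: (big_ind (fun y => Num.min 1 (c p) <= y)) => //.
  by move=> x y hx hy; rewrite le_min hx hy.
move=> m.
rewrite /A_p.
set S := (\sum_(k < n.+1) (m k)%:R / (k.+1)%:R : R).
set P := (\prod_(k < n.+1 | val k == 0%N) (0 : R) ^+ (m k)).
set w := (\sum_(k < n.+1 | (1 <= val k)%N) (m k)%:R * a_coef p k.+1 : R).
have hq : 0 <= 1 - p by case/andP: hp => _ h; rewrite subr_ge0 ltW.
have hP0 : 0 <= P by apply: prodr_ge0 => k _; apply: exprn_ge0.
have hw0 : 0 <= w.
  by apply: sumr_ge0 => k _; apply: mulr_ge0 => //; rewrite /a_coef.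
have hSU : U p * w <= S.
  rewrite /w mulr_sumr /S [X in _ <= X](bigID (fun k : 'I_n.+1 => (1 <= val k)%N)) /=.
  apply: ler_wpDr.
    by apply: sumr_ge0 => k _; apply: divr_ge0.
  apply: ler_sum => k k1.
  rewrite mulrCA; apply: ler_wpM2l => //.
  by rewrite -div1r; apply: U_bound.
have hS0 : (m ord0)%:R <= S.
  rewrite /S (bigD1 ord0) //= divr1 lerDl.
  by apply: sumr_ge0 => k _; apply: divr_ge0.
case E: (nat_of_ord (m ord0)) => [|k].
  have -> : P = 1.
    apply: big1 => k /eqP hk.
    have -> : k = ord0 by apply: val_inj.
    by rewrite E expr0.
  rewrite mulr1 ge_min; apply/orP; right.
  apply: (le_trans _ (lerD hSU (lexx _))).
  have hE : has_lbound [set U p * w + (1 - p) * expR (- w) | w in [set w : R | 0 <= w]].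
    exists 0 => _ [v hv <-]; rewrite /= in hv.
    apply: addr_ge0; apply: mulr_ge0 => //; first exact: U_ge0.
  apply: (ge_inf hE).
  by exists w.
rewrite ge_min; apply/orP; left.
apply: (@le_trans _ _ S).
  apply: (le_trans _ hS0); by rewrite E ler1n.
rewrite lerDl.
apply: mulr_ge0; first exact: mulr_ge0.
exact: expR_ge0.
Qed.
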